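(* Let $a,c\in\mathbb{C}$ with $c\notin\{0,-1,-2,\dots\}$. Then for all $x\in\mathbb{C}$, $$\phi_2(a,a;c;x,-x)={}_1F_2\!\left[\begin{array}{c}a\\ \tfrac12 c,\ \tfrac12 c+\tfrac12\end{array};\frac{x^2}{4}\right]=\sum_{k=0}^\infty\frac{(a)_k}{(\tfrac12 c)_k(\tfrac12 c+\tfrac12)_k}\frac{(x^2/4)^k}{k!}.$$ In particular, if $2a\notin\{0,-1,-2,\dots\}$, then $$\phi_2(a,a;2a;x,-x)={}_0F_1\!\left[\begin{array}{c}-\\ a+\tfrac12\end{array};\frac{x^2}{4}\right]=\sum_{k=0}^\infty\frac{1}{(a+\tfrac12)_k}\frac{(x^2/4)^k}{k!}.$$
   Context: $(\lambda)_n=\Gamma(\lambda+n)/\Gamma(\lambda)$ denotes the Pochhammer symbol. Humbert's function $\phi_2$ is defined by $$\phi_2(a,b;c;x,y)=\sum_{n=0}^\infty\sum_{k=0}^\infty\frac{(a)_n(b)_k}{(c)_{n+k}}\frac{x^n y^k}{n!\,k!},$$ convergent for all $x,y\in\mathbb{C}$ when $c\notin\{0,-1,-2,\dots\}$. *)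

(* Defs.v *)
From Stdlib Require Import Reals Arith Factorial.
Open Scope R_scope.

Definition Cx : Type := (R * R)%type.

Definition RtoC (r : R) : Cx := (r, 0).
Definition Cadd (z w : Cx) : Cx := (fst z + fst w, snd z + snd w).
Definition Copp (z : Cx) : Cx := (- fst z, - snd z).
Definition Csub (z w : Cx) : Cx := Cadd z (Copp w).
Definition Cmul (z w : Cx) : Cx :=
  (fst z * fst w - snd z * snd w, fst z * snd w + snd z * fst w).
Definition Cinv (z : Cx) : Cx :=
  let d := fst z * fst z + snd z * snd z in (fst z / d, - snd z / d).
Definition Cdiv (z w : Cx) : Cx := Cmul z (Cinv w).
Definition Cmod (z : Cx) : R := sqrt (fst z * fst z + snd z * snd z).
Definition C0 : Cx := RtoC 0.
Definition C1 : Cx := RtoC 1.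
Definition natC (n : nat) : Cx := RtoC (INR n).

Fixpoint Cpow (z : Cx) (n : nat) : Cx :=
  match n with O => C1 | S m => Cmul (Cpow z m) z end.

Fixpoint poch (l : Cx) (n : nat) : Cx :=
  match n with O => C1 | S m => Cmul (poch l m) (Cadd l (natC m)) end.

Fixpoint Csum (f : nat -> Cx) (N : nat) : Cx :=
  match N with O => f O | S M => Cadd (Csum f M) (f (S M)) end.

Definition Cseq_cv (u : nat -> Cx) (L : Cx) : Prop :=
  forall eps : R, eps > 0 -> exists N : nat, forall n : nat, (n >= N)%nat ->
    Cmod (Csub (u n) L) < eps.

Definition not_nonpos_int (z : Cx) : Prop := forall m : nat, z <> RtoC (- INR m).

Definition phi2_term (a b c x y : Cx) (n k : nat) : Cx :=
  Cdiv (Cmul (Cmul (poch a n) (poch b k)) (Cmul (Cpow x n) (Cpow y k)))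
       (Cmul (poch c (n + k)) (natC (fact n * fact k))).

(* Triangular partial sums: sum over n + k <= N. *)
Definition phi2_partial (a b c x y : Cx) (N : nat) : Cx :=
  Csum (fun M => Csum (fun n => phi2_term a b c x y n (M - n)) M) N.

Definition phi2_sums_to (a b c x y L : Cx) : Prop :=
  Cseq_cv (phi2_partial a b c x y) L.

Definition series_sums_to (t : nat -> Cx) (L : Cx) : Prop :=
  Cseq_cv (Csum t) L.

Definition half : Cx := RtoC (1/2).

Definition F12_term (a b1 b2 z : Cx) (k : nat) : Cx :=
  Cdiv (Cmul (poch a k) (Cpow z k))
       (Cmul (Cmul (poch b1 k) (poch b2 k)) (natC (fact k))).

Definition F01_term (b z : Cx) (k : nat) : Cx :=
  Cdiv (Cpow z k) (Cmul (poch b k) (natC (fact k))).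

(* Main.v *)
From Stdlib Require Import Reals Lra Lia Field Arith Factorial.
From Coquelicot Require Import Coquelicot.
Require Import Defs.
Open Scope R_scope.

Lemma Cx_eq (z w : Cx) : fst z = fst w -> snd z = snd w -> z = w.
Proof. destruct z, w; simpl; intros; subst; reflexivity. Qed.

Ltac ceq := intros; repeat match goal with z : Cx |- _ => destruct z end;
  apply Cx_eq; unfold Cadd, Cmul, Csub, Copp, C0, C1, RtoC; simpl; ring.

Lemma Cx_ring : ring_theory C0 C1 Cadd Cmul Csub Copp (@eq Cx).
Proof. constructor; ceq. Qed.

Lemma Cx_field : field_theory C0 C1 Cadd Cmul Csub Copp Cdiv Cinv (@eq Cx).
Proof.
  constructor.
  - exact Cx_ring.
  - intro H. injection H. lra.
  - reflexivity.
  - intros [a b] Hp. apply Cx_eq; unfold Cmul, Cinv, C1, RtoC; simpl.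
    + assert (a*a+b*b <> 0).
      { intro H. apply Hp. unfold C0, RtoC. assert (a = 0) by nra. assert (b = 0) by nra. subst; reflexivity. }
      field. auto.
    + assert (a*a+b*b <> 0).
      { intro H. apply Hp. unfold C0, RtoC. assert (a = 0) by nra. assert (b = 0) by nra. subst; reflexivity. }
      field. auto.
Qed.

Add Field Cx_field_inst : Cx_field.


Lemma natC_0 : natC 0 = C0. Proof. reflexivity. Qed.
Lemma natC_S n : natC (S n) = Cadd (natC n) C1.
Proof. unfold natC, RtoC, Cadd, C1. rewrite S_INR. apply Cx_eq; simpl; ring. Qed.
Lemma natC_add n m : natC (n + m) = Cadd (natC n) (natC m).
Proof. unfold natC, RtoC, Cadd. rewrite plus_INR. apply Cx_eq; simpl; ring. Qed.
Lemma natC_mul n m : natC (n * m) = Cmul (natC n) (natC m).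
Proof. unfold natC, RtoC, Cmul. rewrite mult_INR. apply Cx_eq; simpl; ring. Qed.
Lemma natC_neq0 n : n <> 0%nat -> natC n <> C0.
Proof. intros H E. unfold natC, RtoC, C0 in E. injection E. apply not_0_INR. auto. Qed.
Lemma natC_S_neq0 n : natC (S n) <> C0.
Proof. apply natC_neq0. lia. Qed.
Lemma natC_fact_neq0 n : natC (fact n) <> C0.
Proof. apply natC_neq0. apply fact_neq_0. Qed.

Lemma Cmul_neq0 x y : x <> C0 -> y <> C0 -> Cmul x y <> C0.
Proof.
  intros Hx Hy E. apply Hx.
  assert (x = Cmul (Cmul x y) (Cinv y)) by (field; auto).
  rewrite H, E. ring.
Qed.

Lemma Cmul_eq0_l x y : Cmul x y <> C0 -> x <> C0.
Proof. intros H E. apply H. rewrite E. ring. Qed.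
Lemma Cmul_eq0_r x y : Cmul x y <> C0 -> y <> C0.
Proof. intros H E. apply H. rewrite E. ring. Qed.

Lemma Cpow_add z n m : Cpow z (n + m) = Cmul (Cpow z n) (Cpow z m).
Proof. induction m; simpl. rewrite Nat.add_0_r. ring.
  rewrite Nat.add_succ_r. simpl. rewrite IHm. ring. Qed.
Lemma Cpow_mul z w n : Cpow (Cmul z w) n = Cmul (Cpow z n) (Cpow w n).
Proof. induction n; simpl. ring. rewrite IHn. ring. Qed.
Lemma Cpow_neq0 z n : z <> C0 -> Cpow z n <> C0.
Proof. intros H; induction n; simpl. intro E; injection E; lra. apply Cmul_neq0; auto. Qed.
Lemma Cpow_inv z n : z <> C0 -> Cpow (Cinv z) n = Cinv (Cpow z n).
Proof. intros H; induction n; simpl. apply Cx_eq; unfold Cinv, C1, RtoC; simpl; field.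
  rewrite IHn. field. split; auto. apply Cpow_neq0; auto. Qed.

Lemma poch_neq0 c n : not_nonpos_int c -> poch c n <> C0.
Proof.
  intros Hc; induction n; simpl. intro E; injection E; lra.
  apply Cmul_neq0; auto. intro E. apply (Hc n).
  destruct c as [c1 c2]. unfold Cadd, natC, RtoC, C0 in *. simpl in E. injection E. intros.
  apply Cx_eq; simpl; lra.
Qed.

Lemma poch_S c n : poch c (S n) = Cmul (poch c n) (Cadd c (natC n)).
Proof. reflexivity. Qed.

Lemma Csum_ext_le f g N : (forall n, (n <= N)%nat -> f n = g n) -> Csum f N = Csum g N.
Proof. induction N; intros H; simpl. apply H; lia. rewrite IHN, H; auto. Qed.
Lemma Csum_add f g N : Csum (fun n => Cadd (f n) (g n)) N = Cadd (Csum f N) (Csum g N).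
Proof. induction N; simpl; auto. rewrite IHN. ring. Qed.
Lemma Csum_sub f g N : Csum (fun n => Csub (f n) (g n)) N = Csub (Csum f N) (Csum g N).
Proof. induction N; simpl; auto. rewrite IHN. ring. Qed.
Lemma Csum_scal c f N : Csum (fun n => Cmul c (f n)) N = Cmul c (Csum f N).
Proof. induction N; simpl; auto. rewrite IHN. ring. Qed.
Lemma Csum_shift f N : Csum f (S N) = Cadd (f 0%nat) (Csum (fun n => f (S n)) N).
Proof. induction N. simpl. auto. remember (S N) as K. simpl. rewrite IHN. subst. simpl. ring. Qed.
Lemma Csum_zero f N : (forall n, (n <= N)%nat -> f n = C0) -> Csum f N = C0.
Proof. induction N; intros H; simpl. apply H; lia. rewrite IHN, H; auto. ring. Qed.

Definition conv (f g : nat -> Cx) M := Csum (fun n => Cmul (f n) (g (M - n)%nat)) M.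

Lemma L2a f g M :
  Csum (fun n => Cmul (natC n) (Cmul (f n) (g (S M - n)%nat))) (S M)
  = conv (fun n => Cmul (natC (S n)) (f (S n))) g M.
Proof.
  rewrite Csum_shift. rewrite natC_0. unfold conv.
  replace (Csum _ M) with (Csum (fun n => Cmul (Cmul (natC (S n)) (f (S n))) (g (M - n)%nat)) M).
  ring. apply Csum_ext_le. intros n Hn. simpl. ring.
Qed.

Lemma L2b f g M :
  Csum (fun n => Cmul (natC (S M - n)) (Cmul (f n) (g (S M - n)%nat))) (S M)
  = conv f (fun k => Cmul (natC (S k)) (g (S k))) M.
Proof.
  change (Csum ?F (S M)) with (Cadd (Csum F M) (F (S M))); cbv beta. rewrite Nat.sub_diag, natC_0.
  unfold conv. replace (Csum _ M) with (Csum (fun n => Cmul (f n) (Cmul (natC (S (M - n))) (g (S (M - n))))) M).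
  ring. apply Csum_ext_le. intros n Hn. rewrite <- Nat.sub_succ_l by lia. ring.
Qed.

Section Rec.
Variable a : Cx.
Variables u v : nat -> Cx.
Hypothesis hu : forall n, Cmul (natC (S n)) (u (S n)) = Cmul (Cadd (natC n) a) (u n).
Hypothesis hv : forall n, Cmul (natC (S n)) (v (S n)) = Copp (Cmul (Cadd (natC n) a) (v n)).

Lemma conv_rec M : Cmul (natC (S (S M))) (conv u v (S (S M)))
  = Cmul (Cadd (natC M) (Cadd a a)) (conv u v M).
Proof.
  unfold conv at 1. rewrite <- Csum_scal.
  rewrite (Csum_ext_le _ (fun n => Cadd (Cmul (natC n) (Cmul (u n) (v (S (S M) - n)%nat)))
      (Cmul (natC (S (S M) - n)) (Cmul (u n) (v (S (S M) - n)%nat))))).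
  2:{ intros n Hn. replace (natC (S (S M))) with (Cadd (natC n) (natC (S (S M) - n))).
      ring. rewrite <- natC_add. f_equal. lia. }
  rewrite Csum_add, L2a, L2b.
  unfold conv. rewrite <- Csum_add.
  rewrite (Csum_ext_le _ (fun n => Csub (Cmul (natC n) (Cmul (u n) (v (S M - n)%nat)))
      (Cmul (natC (S M - n)) (Cmul (u n) (v (S M - n)%nat))))).
  2:{ intros n Hn. rewrite hu. rewrite hv. ring. }
  rewrite Csum_sub, L2a, L2b. unfold conv. rewrite <- Csum_sub, <- Csum_scal.
  apply Csum_ext_le. intros n Hn. rewrite hu. rewrite hv.
  replace (natC M) with (Cadd (natC n) (natC (M - n))). ring.
  rewrite <- natC_add. f_equal. lia.
Qed.
End Rec.

Definition uu (a : Cx) n := Cdiv (poch a n) (natC (fact n)).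
Definition vv (a : Cx) n := Cmul (Cpow (Copp C1) n) (uu a n).

Lemma hu_uu a n : Cmul (natC (S n)) (uu a (S n)) = Cmul (Cadd (natC n) a) (uu a n).
Proof.
  unfold uu. rewrite poch_S. change (fact (S n)) with (S n * fact n)%nat.
  rewrite natC_mul. field. split. apply natC_fact_neq0. apply natC_S_neq0.
Qed.

Lemma hv_vv a n : Cmul (natC (S n)) (vv a (S n)) = Copp (Cmul (Cadd (natC n) a) (vv a n)).
Proof.
  unfold vv. simpl Cpow.
  transitivity (Cmul (Cmul (Cpow (Copp C1) n) (Copp C1)) (Cmul (natC (S n)) (uu a (S n)))). ring.
  rewrite hu_uu. ring.
Qed.

Lemma natC_1 : natC 1 = C1.
Proof. apply Cx_eq; reflexivity. Qed.
Lemma uu_0 a : uu a 0 = C1.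
Proof. unfold uu. simpl poch. change (fact 0) with 1%nat. rewrite natC_1. field. intro E; injection E; lra. Qed.
Lemma uu_1 a : uu a 1 = a.
Proof. unfold uu. rewrite poch_S. change (poch a 0) with C1. change (fact 1) with 1%nat. rewrite natC_1, natC_0.
  field. intro E; injection E; lra. Qed.
Lemma vv_0 a : vv a 0 = C1.
Proof. unfold vv. rewrite uu_0. simpl. ring. Qed.
Lemma vv_1 a : vv a 1 = Copp a.
Proof. unfold vv. rewrite uu_1. simpl. ring. Qed.

Lemma two_neq0 n : Cadd (natC (S n)) (natC (S n)) <> C0.
Proof. rewrite <- natC_add. apply natC_neq0. lia. Qed.

Lemma conv_closed a m : conv (uu a) (vv a) (m + m) = uu a m /\ conv (uu a) (vv a) (S (m + m)) = C0.
Proof.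
  induction m.
  - unfold conv. cbn [Nat.add Csum Nat.sub]. rewrite uu_0, vv_0, uu_1, vv_1. split; ring.
  - destruct IHm as [He Ho].
    assert (Hrec := conv_rec a (uu a) (vv a) (hu_uu a) (hv_vv a)).
    replace (S m + S m)%nat with (S (S (m + m))) by lia.
    split.
    + assert (E1 : conv (uu a) (vv a) (S (S (m + m))) =
        Cdiv (Cmul (natC (S (S (m+m)))) (conv (uu a) (vv a) (S (S (m + m))))) (natC (S (S (m+m))))).
      { field. apply natC_S_neq0. }
      rewrite E1, Hrec, He.
      assert (E2 : uu a (S m) = Cdiv (Cmul (natC (S m)) (uu a (S m))) (natC (S m))).
      { field. apply natC_S_neq0. }
      rewrite E2, hu_uu.
      replace (S (S (m + m))) with (S m + S m)%nat by lia.
      rewrite !natC_add, natC_S.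
      assert (H2 := two_neq0 m). rewrite natC_S in H2.
      field. split; auto. rewrite <- natC_S. apply natC_S_neq0.
    + assert (E1 : conv (uu a) (vv a) (S (S (S (m + m)))) =
        Cdiv (Cmul (natC (S (S (S (m+m))))) (conv (uu a) (vv a) (S (S (S (m + m)))))) (natC (S (S (S (m+m)))))).
      { field. apply natC_S_neq0. }
      rewrite E1, Hrec, Ho. field. apply natC_S_neq0.
Qed.

Lemma Copp_C1 x : Copp x = Cmul (Copp C1) x.
Proof. ring. Qed.

Lemma phi2_term_eq a c x n k : poch c (n + k) <> C0 ->
  phi2_term a a c x (Copp x) n k =
  Cmul (Cdiv (Cpow x (n + k)) (poch c (n + k))) (Cmul (uu a n) (vv a k)).
Proof.
  intros H. unfold phi2_term, vv, uu. rewrite Cpow_add, natC_mul, (Copp_C1 x), Cpow_mul.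
  field. repeat split; auto using natC_fact_neq0.
Qed.

Definition Sterm a c x M := Cmul (Cdiv (Cpow x M) (poch c M)) (conv (uu a) (vv a) M).

Lemma inner_eq a c x M : not_nonpos_int c ->
  Csum (fun n => phi2_term a a c x (Copp x) n (M - n)) M = Sterm a c x M.
Proof.
  intros Hc. unfold Sterm, conv. rewrite <- Csum_scal. apply Csum_ext_le. intros n Hn.
  rewrite phi2_term_eq. replace (n + (M - n))%nat with M by lia. reflexivity.
  apply poch_neq0; auto.
Qed.

Lemma half_eq : half = Cinv (Cadd C1 C1).
Proof. apply Cx_eq; unfold half, Cinv, Cadd, C1, RtoC; simpl; field. Qed.
Lemma four_eq : RtoC 4 = Cmul (Cadd C1 C1) (Cadd C1 C1).
Proof. apply Cx_eq; unfold Cmul, Cadd, C1, RtoC; simpl; ring. Qed.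
Lemma two_C_neq0 : Cadd C1 C1 <> C0.
Proof. unfold Cadd, C1, C0, RtoC; simpl. intro E; injection E; lra. Qed.
Lemma four_neq0 : RtoC 4 <> C0.
Proof. rewrite four_eq. apply Cmul_neq0; apply two_C_neq0. Qed.

Lemma poch_double c m : poch c (m + m) =
  Cmul (Cmul (Cpow (RtoC 4) m) (poch (Cmul half c) m)) (poch (Cadd (Cmul half c) half) m).
Proof.
  induction m. simpl. ring.
  replace (S m + S m)%nat with (S (S (m + m))) by lia.
  rewrite !poch_S, IHm. simpl Cpow. rewrite natC_S, natC_add, four_eq, half_eq.
  field. apply two_C_neq0.
Qed.

Definition Tterm a c x := F12_term a (Cmul half c) (Cadd (Cmul half c) half)
                   (Cdiv (Cmul x x) (RtoC 4)).

Lemma pochb_neq0 c m : not_nonpos_int c ->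
  poch (Cmul half c) m <> C0 /\ poch (Cadd (Cmul half c) half) m <> C0.
Proof.
  intros Hc. assert (H := poch_neq0 c (m + m) Hc). rewrite poch_double in H.
  split. eapply Cmul_eq0_r, Cmul_eq0_l; eauto. eapply Cmul_eq0_r; eauto.
Qed.

Lemma Sterm_even a c x m : not_nonpos_int c -> Sterm a c x (m + m) = Tterm a c x m.
Proof.
  intros Hc. unfold Sterm, Tterm, F12_term. rewrite (proj1 (conv_closed a m)).
  destruct (pochb_neq0 c m Hc) as [H1 H2].
  rewrite poch_double. unfold uu. rewrite Cpow_add.
  replace (Cpow (Cdiv (Cmul x x) (RtoC 4)) m) with (Cmul (Cmul (Cpow x m) (Cpow x m)) (Cinv (Cpow (RtoC 4) m))).
  2:{ unfold Cdiv. rewrite Cpow_mul, Cpow_mul, Cpow_inv by apply four_neq0. reflexivity. }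
  field. repeat split; auto using natC_fact_neq0. apply Cpow_neq0, four_neq0.
Qed.

Lemma Sterm_odd a c x m : Sterm a c x (S (m + m)) = C0.
Proof. unfold Sterm. rewrite (proj2 (conv_closed a m)). ring. Qed.

Lemma partial_eq a c x N : not_nonpos_int c ->
  phi2_partial a a c x (Copp x) N = Csum (Tterm a c x) (Nat.div2 N).
Proof.
  intros Hc.
  assert (Hp : forall N, phi2_partial a a c x (Copp x) N = Csum (Sterm a c x) N).
  { intros K. unfold phi2_partial. induction K. exact (inner_eq a c x 0 Hc).
    transitivity (Cadd (Csum (Sterm a c x) K) (Sterm a c x (S K))); [| reflexivity].
    rewrite <- IHK, <- inner_eq by auto. reflexivity. }
  assert (He : forall m, Csum (Sterm a c x) (m + m) = Csum (Tterm a c x) m /\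
                        Csum (Sterm a c x) (S (m + m)) = Csum (Tterm a c x) m).
  { induction m.
    - split. exact (Sterm_even a c x 0 Hc).
      change (Cadd (Sterm a c x (0 + 0)) (Sterm a c x (S (0 + 0))) = Tterm a c x 0).
      rewrite Sterm_even, Sterm_odd by auto. ring.
    - destruct IHm as [_ IH]. replace (S m + S m)%nat with (S (S (m + m))) by lia.
      assert (E : Csum (Sterm a c x) (S (S (m + m))) = Csum (Tterm a c x) (S m)).
      { change (Csum (Sterm a c x) (S (S (m + m)))) with
          (Cadd (Csum (Sterm a c x) (S (m + m))) (Sterm a c x (S (S (m + m))))).
        rewrite IH. replace (S (S (m + m))) with (S m + S m)%nat by lia.
        rewrite Sterm_even by auto. reflexivity. }
      split; auto. change (Csum (Sterm a c x) (S (S (S (m + m))))) with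
          (Cadd (Csum (Sterm a c x) (S (S (m + m)))) (Sterm a c x (S (S (S (m + m)))))).
      rewrite E. replace (S (S (m + m))) with (S m + S m)%nat by lia. rewrite Sterm_odd. ring. }
  rewrite Hp. destruct (Nat.Even_or_Odd N) as [[m Hm]|[m Hm]]; subst N.
  - replace (2 * m)%nat with (m + m)%nat by lia. rewrite (proj1 (He m)).
    f_equal. replace (m + m)%nat with (2 * m)%nat by lia. symmetry. apply Nat.div2_double.
  - replace (2 * m + 1)%nat with (S (m + m))%nat by lia. rewrite (proj2 (He m)).
    f_equal. replace (S (m + m))%nat with (S (2 * m))%nat by lia. symmetry. apply Nat.div2_succ_double.
Qed.

Lemma Cmod_eq z : Cmod z = Complex.Cmod z.
Proof. unfold Cmod, Complex.Cmod. f_equal. simpl. ring. Qed.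
Lemma Cmod_mul x y : Cmod (Cmul x y) = Cmod x * Cmod y.
Proof. rewrite !Cmod_eq. apply Cmod_mult. Qed.
Lemma Cmod_add x y : Cmod (Cadd x y) <= Cmod x + Cmod y.
Proof. rewrite !Cmod_eq. apply Cmod_triangle. Qed.
Lemma Cmod_pos x : 0 <= Cmod x.
Proof. rewrite Cmod_eq. apply Cmod_ge_0. Qed.
Lemma Cmod_natC m : Cmod (natC m) = INR m.
Proof. rewrite Cmod_eq. unfold natC, RtoC. change (Complex.Cmod (Complex.RtoC (INR m)) = INR m).
  rewrite Cmod_R. apply Rabs_pos_eq, pos_INR. Qed.
Lemma Cmod_opp' x : Cmod (Copp x) = Cmod x.
Proof. rewrite !Cmod_eq. apply Cmod_opp. Qed.

Lemma Cmod_lower b m : INR m - Cmod b <= Cmod (Cadd b (natC m)).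
Proof.
  assert (H := Cmod_add (Cadd b (natC m)) (Copp b)).
  replace (Cadd (Cadd b (natC m)) (Copp b)) with (natC m) in H by ring.
  rewrite Cmod_natC, Cmod_opp' in H. lra.
Qed.
Lemma Cmod_upper a m : Cmod (Cadd a (natC m)) <= Cmod a + INR m.
Proof. rewrite <- Cmod_natC. apply Cmod_add. Qed.

Section Conv.
Variables a b1 b2 z : Cx.
Hypothesis H1 : forall m, poch b1 m <> C0.
Hypothesis H2 : forall m, poch b2 m <> C0.
Let T := F12_term a b1 b2 z.

Lemma b_neq0 b m : (forall m, poch b m <> C0) -> Cadd b (natC m) <> C0.
Proof. intros H. apply (Cmul_eq0_r (poch b m)). apply (H (S m)). Qed.

Lemma T_ratio m : Cmul (T (S m)) (Cmul (Cmul (Cadd b1 (natC m)) (Cadd b2 (natC m))) (natC (S m)))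
  = Cmul (T m) (Cmul (Cadd a (natC m)) z).
Proof.
  unfold T, F12_term. rewrite !poch_S. simpl Cpow. change (fact (S m)) with (S m * fact m)%nat.
  rewrite natC_mul. field.
  repeat split; auto using natC_fact_neq0, natC_S_neq0, b_neq0.
Qed.

Lemma T_bound : exists K, forall m, (K <= m)%nat -> Cmod (T (S m)) <= / 2 * Cmod (T m).
Proof.
  set (A := Cmod a). set (B1 := Cmod b1). set (B2 := Cmod b2). set (Z := Cmod z).
  assert (hA : 0 <= A) by apply Cmod_pos. assert (hB1 : 0 <= B1) by apply Cmod_pos.
  assert (hB2 : 0 <= B2) by apply Cmod_pos. assert (hZ : 0 <= Z) by apply Cmod_pos.
  destruct (INR_unbounded (2*B1 + 2*B2 + 8*Z*(A+1) + 1)) as [K HK].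
  exists K. intros m Hm. apply le_INR in Hm. set (x := INR m) in *.
  assert (E := f_equal Cmod (T_ratio m)). rewrite !Cmod_mul, Cmod_natC, S_INR in E. fold x in E.
  assert (L1 := Cmod_lower b1 m). assert (L2 := Cmod_lower b2 m). assert (U := Cmod_upper a m).
  fold x A B1 B2 in L1, L2, U. fold Z in E.
  set (D1 := Cmod (Cadd b1 (natC m))) in *. set (D2 := Cmod (Cadd b2 (natC m))) in *.
  set (Na := Cmod (Cadd a (natC m))) in *.
  set (t1 := Cmod (T (S m))) in *. set (t0 := Cmod (T m)) in *.
  assert (ht0 : 0 <= t0) by apply Cmod_pos. assert (ht1 : 0 <= t1) by apply Cmod_pos.
  assert (hZA : 0 <= Z * (A + 1)) by nra. assert (hx : 1 <= x) by lra. assert (hx8 : 8 * Z * (A + 1) <= x) by lra.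
  assert (hD1 : x / 2 <= D1) by lra. assert (hD2 : x / 2 <= D2) by lra.
  assert (hNa : 0 <= Na) by apply Cmod_pos.
  assert (hNZ : Na * Z <= x * x / 8).
  { apply Rle_trans with ((A + x) * Z). apply Rmult_le_compat_r; lra.
    apply Rle_trans with (x * Z * (A + 1)). assert (0 <= A*Z*(x-1)) by (apply Rmult_le_pos; [apply Rmult_le_pos|]; lra). nra.
    assert (x * (Z * (A + 1)) <= x * (x / 8)) by (apply Rmult_le_compat_l; lra). nra. }
  assert (hDD : x * x / 4 <= D1 * D2).
  { replace (x * x / 4) with ((x/2) * (x/2)) by field. apply Rmult_le_compat; lra. }
  assert (hDpos : 0 < D1 * D2 * (x + 1)) by nra.
  assert (hN : Na * Z <= / 2 * (D1 * D2 * (x + 1))) by nra.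
  apply Rmult_le_reg_r with (D1 * D2 * (x + 1)); auto.
  rewrite E. nra.
Qed.

Lemma T_geom K : (forall m, (K <= m)%nat -> Cmod (T (S m)) <= / 2 * Cmod (T m)) ->
  forall j, Cmod (T (K + j)%nat) <= Cmod (T K) * (/ 2) ^ j.
Proof.
  intros HK j. induction j.
  - rewrite Nat.add_0_r. simpl. lra.
  - rewrite Nat.add_succ_r. eapply Rle_trans. apply HK. lia.
    simpl. assert (0 <= / 2) by lra. nra.
Qed.

Lemma sum_n_Csum (f : nat -> C) n : @sum_n C_AbelianMonoid f n = Csum f n.
Proof. induction n. rewrite sum_O. reflexivity. rewrite sum_Sn, IHn. reflexivity. Qed.

Lemma T_conv : exists L, Cseq_cv (Csum T) L.
Proof.
  destruct T_bound as [K HK].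
  assert (Hs : @ex_series C_AbsRing C_NormedModule (fun k => T (K + k)%nat)).
  { apply (@ex_series_le C_AbsRing C_CompleteNormedModule _ (fun k => Cmod (T K) * (/ 2) ^ k)).
    - intro k. change (Complex.Cmod (T (K + k)%nat) <= Cmod (T K) * (/ 2) ^ k). rewrite <- Cmod_eq. apply T_geom; auto.
    - apply (ex_series_ext (fun n => scal (Cmod (T K)) ((/ 2) ^ n))). reflexivity.
      apply (@ex_series_scal_l R_AbsRing R_NormedModule (Cmod (T K)) (fun n => (/ 2) ^ n)). apply ex_series_geom. rewrite Rabs_pos_eq; lra. }
  apply ex_series_incr_n in Hs. destruct Hs as [L HL].
  exists L. intros eps Heps.
  assert (Hnf := @norm_factor_gt_0 C_AbsRing C_NormedModule).
  set (nf := @norm_factor C_AbsRing C_NormedModule) in *.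
  assert (Hep : 0 < eps / nf) by (apply Rdiv_lt_0_compat; lra).
  unfold is_series in HL. pose proof (proj1 (@filterlim_locally nat (NormedModule.UniformSpace C_AbsRing C_NormedModule) eventually _ _ _) HL (mkposreal _ Hep)) as HL2.
  clear HL. rename HL2 into HL.
  destruct HL as [N HN]. exists N. intros n Hn. specialize (HN n Hn).
  apply norm_compat2 in HN. rewrite sum_n_Csum in HN.
  change (Complex.Cmod (Csub (Csum T n) L) < nf * (eps / nf)) in HN.
  replace (nf * (eps / nf)) with eps in HN by (field; lra).
  rewrite Cmod_eq. exact HN.
Qed.
End Conv.

Lemma part1 : forall (a c : Cx), not_nonpos_int c -> forall x : Cx,
     exists L : Cx,
       phi2_sums_to a a c x (Copp x) L /\
       series_sums_to
         (F12_term a (Cmul half c) (Cadd (Cmul half c) half)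
                   (Cdiv (Cmul x x) (RtoC 4))) L.
Proof.
  intros a c Hc x.
  destruct (T_conv a (Cmul half c) (Cadd (Cmul half c) half) (Cdiv (Cmul x x) (RtoC 4)))
    as [L HL].
  - intro m. apply (pochb_neq0 c m Hc).
  - intro m. apply (pochb_neq0 c m Hc).
  - exists L. split; auto.
    intros eps Heps. destruct (HL eps Heps) as [N HN]. exists (2 * N)%nat.
    intros n Hn. unfold phi2_partial. fold (phi2_partial a a c x (Copp x) n).
    rewrite partial_eq by auto. apply HN.
    rewrite Nat.div2_div. apply Nat.div_le_lower_bound; lia.
Qed.

Lemma two_half a : Cmul half (Cmul (RtoC 2) a) = a.
Proof.
  replace (RtoC 2) with (Cadd C1 C1) by (apply Cx_eq; unfold Cadd, C1, RtoC; simpl; ring).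
  rewrite half_eq. field. apply two_C_neq0.
Qed.

Theorem mainTheorem3 :
  (forall (a c : Cx), not_nonpos_int c -> forall x : Cx,
     exists L : Cx,
       phi2_sums_to a a c x (Copp x) L /\
       series_sums_to
         (F12_term a (Cmul half c) (Cadd (Cmul half c) half)
                   (Cdiv (Cmul x x) (RtoC 4))) L)
  /\
  (forall a : Cx, not_nonpos_int (Cmul (RtoC 2) a) -> forall x : Cx,
     exists L : Cx,
       phi2_sums_to a a (Cmul (RtoC 2) a) x (Copp x) L /\
       series_sums_to
         (F01_term (Cadd a half) (Cdiv (Cmul x x) (RtoC 4))) L).
Proof.
  split. exact part1.
  intros a Ha x. destruct (part1 a _ Ha x) as [L [HP HS]].
  exists L. split; auto.
  intros eps Heps. destruct (HS eps Heps) as [N HN]. exists N. intros n Hn.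
  specialize (HN n Hn).
  replace (Csum (F01_term (Cadd a half) (Cdiv (Cmul x x) (RtoC 4))) n) with
    (Csum (F12_term a (Cmul half (Cmul (RtoC 2) a)) (Cadd (Cmul half (Cmul (RtoC 2) a)) half)
              (Cdiv (Cmul x x) (RtoC 4))) n); auto.
  apply Csum_ext_le. intros k _.
  destruct (pochb_neq0 _ k Ha) as [P1 P2]. rewrite two_half in *.
  unfold F12_term, F01_term. field. repeat split; auto using natC_fact_neq0.
Qed.
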